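(* Let $(M,\circ,\mathrm{OR})$ be a free $\mathbb{D}$-module of rank 3 with scalar product and orientation, and let $x,y\in M\setminus\epsilon M$ with $x\circ x=y\circ y=1$ and with linearly independent resultants $\pi(x),\pi(y)$. Then $\mathfrak{Du}(x\circ y)=0$ if and only if the axes of $x$ and $y$ intersect. (Consequently $x\circ y=0$ iff their axes intersect orthogonally.)
   Context: $\mathbb{D}=\{a+\epsilon b: a,b\in\mathbb{R}\}$, $\epsilon^2=0$, $\mathfrak{Re},\mathfrak{Du}$ real and dual parts. Scalar product: symmetric $\mathbb{D}$-bilinear $\circ:M\times M\to\mathbb{D}$ with $\mathfrak{Re}(x\circ x)\ge0$, equality iff $x\in\epsilon M$; orientation: one of the two classes of ordered bases under $\{b'_j=A_{jk}b_k\}\sim\{b_k\}$ iff $\det\mathfrak{Re}(A)>0$. $V=M/\epsilon M$, $\pi$ the quotient (resultant) map. $E$ is the set of real 3-dimensional subspaces $P\subset M$ with $\mathfrak{Du}(x\circ y)=0$ for $x,y\in P$ and $P\cap\epsilon M=\{0\}$, a Euclidean affine space over $V$ (with $B-A:=d^ke_k$ where $e^B_i=e^A_i+\epsilon\,\epsilon_{ijk}d^ke^A_j$, $\{e_i\}$ positive orthonormal in $V$, $e^P_i\in P$ its lift). For $u\in M$ with $u\circ u=1$, its axis is the line $\{P\in E: u\in P\}$ of $E$. *)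

(* Defs.v *)
From HB Require Import structures.
From mathcomp Require Import all_boot all_order all_algebra.
From mathcomp Require Import reals.
Set Implicit Arguments. Unset Strict Implicit. Unset Printing Implicit Defensive.
Import Order.TTheory GRing.Theory Num.Theory.
Local Open Scope ring_scope.

Section Dual.
Variable R : realType.

(* Dual numbers a + eps b, represented as the pair (a, b). *)
Definition dual := (R * R)%type.
Definition dRe (d : dual) : R := d.1.
Definition dDu (d : dual) : R := d.2.
Definition dadd (d e : dual) : dual := (d.1 + e.1, d.2 + e.2).
Definition dmul (d e : dual) : dual := (d.1 * e.1, d.1 * e.2 + d.2 * e.1).
Definition dual_one : dual := (1, 0).
Definition dzero : dual := (0, 0).

(* The free D-module of rank 3, D^3, written in a fixed D-basis:
   the element sum_i (a_i + eps b_i) e_i is represented by (a, b). *)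
Definition dmod := ('rV[R]_3 * 'rV[R]_3)%type.
Definition madd (x y : dmod) : dmod := (x.1 + y.1, x.2 + y.2).
Definition dscale (d : dual) (x : dmod) : dmod :=
  (d.1 *: x.1, d.1 *: x.2 + d.2 *: x.1).
Definition rscale (r : R) (x : dmod) : dmod := (r *: x.1, r *: x.2).
Definition mzero : dmod := (0, 0).

Definition in_epsM (x : dmod) : Prop := x.1 = 0.
(* resultant_map map pi : M -> V = M / eps M  (identified with R^3) *)
Definition resultant_map (x : dmod) : 'rV[R]_3 := x.1.

Definition is_scalar_product (sp : dmod -> dmod -> dual) : Prop :=
  [/\ (forall x y, sp x y = sp y x),
      (forall x y z, sp (madd x y) z = dadd (sp x z) (sp y z)),
      (forall d x y, sp (dscale d x) y = dmul d (sp x y)),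
      (forall x, 0 <= dRe (sp x x)) &
      (forall x, dRe (sp x x) = 0 <-> in_epsM x)].

Definition lin_indep2 (u v : 'rV[R]_3) : Prop :=
  forall a b : R, a *: u + b *: v = 0 -> a = 0 /\ b = 0.

Definition rindep3 (p1 p2 p3 : dmod) : Prop :=
  forall a b c : R,
    madd (madd (rscale a p1) (rscale b p2)) (rscale c p3) = mzero ->
    [/\ a = 0, b = 0 & c = 0].

Definition real_subspace3 (P : dmod -> Prop) : Prop :=
  exists p1 p2 p3 : dmod, rindep3 p1 p2 p3 /\
    forall z, P z <-> exists a b c : R,
      z = madd (madd (rscale a p1) (rscale b p2)) (rscale c p3).

Definition pointE (sp : dmod -> dmod -> dual) (P : dmod -> Prop) : Prop :=
  [/\ real_subspace3 P,
      (forall x y, P x -> P y -> dDu (sp x y) = 0) &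
      (forall x, P x -> in_epsM x -> x = mzero)].

Definition axis (sp : dmod -> dmod -> dual) (u : dmod) (P : dmod -> Prop) : Prop :=
  pointE sp P /\ P u.

Definition axes_intersect (sp : dmod -> dmod -> dual) (x y : dmod) : Prop :=
  exists P : dmod -> Prop, axis sp x P /\ axis sp y P.

End Dual.

(* Main.v *)
Require Import Defs.
From HB Require Import structures.
From mathcomp Require Import all_boot all_order all_algebra.
From mathcomp Require Import reals.
From mathcomp Require Import ring lra.
Set Implicit Arguments. Unset Strict Implicit. Unset Printing Implicit Defensive.
Import Order.TTheory GRing.Theory Num.Theory.
Local Open Scope ring_scope.

Definition emb (R : realType) (a : 'rV[R]_3) : dmod R := (a, 0).
Definition deps (R : realType) : dual R := (0, 1).
Definition comb (R : realType) (a b c : R) (p1 p2 p3 : dmod R) :=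
  madd (madd (rscale a p1) (rscale b p2)) (rscale c p3).
Definition gf (R : realType) (sp : dmod R -> dmod R -> dual R) (a b : 'rV[R]_3) :=
  dRe (sp (emb a) (emb b)).

Lemma spC (R : realType) sp (Hsp : @is_scalar_product R sp) p q : sp p q = sp q p.
Proof. by case: Hsp. Qed.

Lemma Re_addl (R : realType) sp (Hsp : @is_scalar_product R sp) p q z :
  dRe (sp (madd p q) z) = dRe (sp p z) + dRe (sp q z).
Proof. by case: Hsp => _ -> _ _ _. Qed.
Lemma Du_addl (R : realType) sp (Hsp : @is_scalar_product R sp) p q z :
  dDu (sp (madd p q) z) = dDu (sp p z) + dDu (sp q z).
Proof. by case: Hsp => _ -> _ _ _. Qed.
Lemma rscaleE (R : realType) (r : R) p : rscale r p = dscale (r, 0) p.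
Proof. by rewrite /rscale /dscale /= scale0r addr0. Qed.
Lemma Re_scalel (R : realType) sp (Hsp : @is_scalar_product R sp) r p z :
  dRe (sp (rscale r p) z) = r * dRe (sp p z).
Proof. by rewrite rscaleE; case: Hsp => _ _ -> _ _. Qed.
Lemma Du_scalel (R : realType) sp (Hsp : @is_scalar_product R sp) r p z :
  dDu (sp (rscale r p) z) = r * dDu (sp p z).
Proof. by rewrite rscaleE; case: Hsp => _ _ -> _ _; rewrite /dDu /= mul0r addr0. Qed.
Lemma Re_epsl (R : realType) sp (Hsp : @is_scalar_product R sp) p z :
  dRe (sp (dscale (deps R) p) z) = 0.
Proof. by case: Hsp => _ _ -> _ _; rewrite /dRe /= mul0r. Qed.
Lemma Du_epsl (R : realType) sp (Hsp : @is_scalar_product R sp) p z :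
  dDu (sp (dscale (deps R) p) z) = dRe (sp p z).
Proof. by case: Hsp => _ _ -> _ _; rewrite /dDu /= mul0r add0r mul1r. Qed.
Lemma decomp (R : realType) (p : dmod R) :
  p = madd (emb p.1) (dscale (deps R) (emb p.2)).
Proof.
by case: p => a b; rewrite /madd /emb /dscale /= !(scale0r, scaler0, scale1r, add0r, addr0).
Qed.
Lemma Re_dec (R : realType) sp (Hsp : @is_scalar_product R sp) p z :
  dRe (sp p z) = gf sp p.1 z.1.
Proof.
rewrite {1}(decomp p) Re_addl // Re_epsl // addr0 /gf.
by rewrite spC // {1}(decomp z) Re_addl // Re_epsl // addr0 spC.
Qed.
Lemma Du_dec (R : realType) sp (Hsp : @is_scalar_product R sp) p z :
  dDu (sp p z) = dDu (sp (emb p.1) z) + dRe (sp (emb p.2) z).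
Proof. by rewrite {1}(decomp p) Du_addl // Du_epsl. Qed.

Lemma gf_sym (R : realType) sp (Hsp : @is_scalar_product R sp) a b :
  gf sp a b = gf sp b a.
Proof. by rewrite /gf spC. Qed.
Lemma gf_addl (R : realType) sp (Hsp : @is_scalar_product R sp) a b c :
  gf sp (a + b) c = gf sp a c + gf sp b c.
Proof.
rewrite /gf; have -> : emb (a + b) = madd (emb a) (emb b) by rewrite /emb /madd /= addr0.
by rewrite Re_addl.
Qed.
Lemma gf_scalel (R : realType) sp (Hsp : @is_scalar_product R sp) r a c :
  gf sp (r *: a) c = r * gf sp a c.
Proof.
rewrite /gf; have -> : emb (r *: a) = rscale r (emb a) by rewrite /emb /rscale /= scaler0.
by rewrite Re_scalel.
Qed.
Lemma gf_addr (R : realType) sp (Hsp : @is_scalar_product R sp) a b c :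
  gf sp c (a + b) = gf sp c a + gf sp c b.
Proof. by rewrite !(gf_sym _ c) // gf_addl. Qed.
Lemma gf_scaler (R : realType) sp (Hsp : @is_scalar_product R sp) r a c :
  gf sp c (r *: a) = r * gf sp c a.
Proof. by rewrite !(gf_sym _ c) // gf_scalel. Qed.
Lemma gf_pos (R : realType) sp (Hsp : @is_scalar_product R sp) a :
  a != 0 -> 0 < gf sp a a.
Proof.
move=> a0; case: Hsp => _ _ _ Hge Heq.
rewrite lt_neqAle Hge andbT; apply/eqP => /esym /Heq.
by rewrite /in_epsM /emb /= => /eqP; rewrite (negbTE a0).
Qed.
Lemma gf_oppl (R : realType) sp (Hsp : @is_scalar_product R sp) a c :
  gf sp (- a) c = - gf sp a c.
Proof. by rewrite -scaleN1r gf_scalel // mulN1r. Qed.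
Lemma gf0l (R : realType) sp (Hsp : @is_scalar_product R sp) c :
  gf sp 0 c = 0.
Proof. by rewrite -(scale0r 0) gf_scalel // mul0r. Qed.
Lemma ord3P (P : 'I_3 -> Prop) : P (inord 0) -> P (inord 1) -> P (inord 2) -> forall k, P k.
Proof.
move=> H0 H1 H2 [[|[|[|m]]] Hk] //.
- by have -> : Ordinal Hk = inord 0 by apply/val_inj; rewrite /= inordK.
- by have -> : Ordinal Hk = inord 1 by apply/val_inj; rewrite /= inordK.
- by have -> : Ordinal Hk = inord 2 by apply/val_inj; rewrite /= inordK.
Qed.

Lemma exists_out (R : realType) (x1 y1 : 'rV[R]_3) : x1 != 0 -> lin_indep2 x1 y1 ->
  exists c : 'rV[R]_3, forall a b, c != a *: x1 + b *: y1.
Proof.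
move=> x0 Hi.
pose p k := x1 0 (inord k); pose q k := y1 0 (inord k).
pose cf (k : nat) := if k == 0%N then p 1%N * q 2%N - p 2%N * q 1%N
   else if k == 1%N then p 2%N * q 0%N - p 0%N * q 2%N else p 0%N * q 1%N - p 1%N * q 0%N.
exists (\row_(k < 3) cf k) => a b; apply/eqP => E.
have C k : (k < 3)%N -> cf k = a * p k + b * q k.
  move=> Hk; have := congr1 (fun m : 'rV[R]_3 => m 0 (inord k)) E.
  by rewrite !mxE inordK.
have C0 := C 0%N erefl; have C1 := C 1%N erefl; have C2 := C 2%N erefl.
rewrite /cf /= in C0 C1 C2.
have S : (p 1%N * q 2%N - p 2%N * q 1%N) ^+ 2 + (p 2%N * q 0%N - p 0%N * q 2%N) ^+ 2
   + (p 0%N * q 1%N - p 1%N * q 0%N) ^+ 2 = 0.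
  have -> : (p 1%N * q 2%N - p 2%N * q 1%N) ^+ 2 + (p 2%N * q 0%N - p 0%N * q 2%N) ^+ 2
   + (p 0%N * q 1%N - p 1%N * q 0%N) ^+ 2 =
   (p 1%N * q 2%N - p 2%N * q 1%N) * (a * p 0%N + b * q 0%N)
   + (p 2%N * q 0%N - p 0%N * q 2%N) * (a * p 1%N + b * q 1%N)
   + (p 0%N * q 1%N - p 1%N * q 0%N) * (a * p 2%N + b * q 2%N) by rewrite -C0 -C1 -C2.
  ring.
have sq3 (A B D : R) : A ^+ 2 + B ^+ 2 + D ^+ 2 = 0 -> [/\ A = 0, B = 0 & D = 0].
  move=> H; have hA := sqr_ge0 A; have hB := sqr_ge0 B; have hD := sqr_ge0 D.
  have eA : A ^+ 2 = 0 by lra.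
  have eB : B ^+ 2 = 0 by lra.
  have eD : D ^+ 2 = 0 by lra.
  by split; apply/eqP; rewrite -sqrf_eq0; apply/eqP.
have [c0 c1 c2] := sq3 _ _ _ S.
have [P0|P0] := eqVneq (p 0%N) 0.
  have [P1|P1] := eqVneq (p 1%N) 0.
    have [P2|P2] := eqVneq (p 2%N) 0.
      move/eqP: x0; apply; apply/rowP; apply: ord3P; by rewrite !mxE.
    have [_ Hb] : q 2%N = 0 /\ - p 2%N = 0.
  apply: Hi.      by apply/rowP; apply: ord3P; rewrite !mxE /= -/(p _) -/(q _); nra.
    by move/eqP: Hb; rewrite oppr_eq0 (negbTE P2).
  have [_ Hb] : q 1%N = 0 /\ - p 1%N = 0.
  apply: Hi.    by apply/rowP; apply: ord3P; rewrite !mxE /= -/(p _) -/(q _); nra.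
  by move/eqP: Hb; rewrite oppr_eq0 (negbTE P1).
have [_ Hb] : q 0%N = 0 /\ - p 0%N = 0.
  apply: Hi.  by apply/rowP; apply: ord3P; rewrite !mxE /= -/(p _) -/(q _); nra.
by move/eqP: Hb; rewrite oppr_eq0 (negbTE P0).
Qed.

Lemma gf_oppr (R : realType) sp (Hsp : @is_scalar_product R sp) a c :
  gf sp c (- a) = - gf sp c a.
Proof. by rewrite !(gf_sym _ c) // gf_oppl. Qed.

Lemma Du_combl (R : realType) sp (Hsp : @is_scalar_product R sp) a b c p1 p2 p3 q :
  dDu (sp (madd (madd (rscale a p1) (rscale b p2)) (rscale c p3)) q) =
  a * dDu (sp p1 q) + b * dDu (sp p2 q) + c * dDu (sp p3 q).
Proof. by rewrite !Du_addl // !Du_scalel. Qed.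

Theorem proposition12 (R : realType) (sp : dmod R -> dmod R -> dual R)
  (Hsp : is_scalar_product sp) (x y : dmod R) :
  ~ in_epsM x -> ~ in_epsM y ->
  sp x x = dual_one R -> sp y y = dual_one R ->
  lin_indep2 (resultant_map x) (resultant_map y) ->
  (dDu (sp x y) = 0 <-> axes_intersect sp x y).
Proof.
move=> nx ny Hxx Hyy Hind; split; last first.
  by case=> P [[[_ HDu _] Px] [_ Py]]; exact: HDu.
move=> Hxy.
rewrite /resultant_map in Hind.
set x1 := x.1 in Hind nx *; set y1 := y.1 in Hind ny *.
have gxx : gf sp x1 x1 = 1 by rewrite -Re_dec // Hxx.
have gyy : gf sp y1 y1 = 1 by rewrite -Re_dec // Hyy.
set t := gf sp x1 y1.
have gyx : gf sp y1 x1 = t by rewrite gf_sym.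
have x10 : x1 != 0 by apply/eqP.
have HD : 0 < 1 - t ^+ 2.
  have v0 : y1 + (- t) *: x1 != 0.
    apply/eqP => E; have [_ H1] : - t = 0 /\ (1:R) = 0.
      by apply: Hind; rewrite scale1r addrC.
    by move/eqP: H1; rewrite oner_eq0.
  have := gf_pos Hsp v0.
  rewrite !(gf_addl, gf_addr, gf_scalel, gf_scaler) // gxx gyy gyx -/t.
  by move=> H; lra.
have D0 : 1 - t ^+ 2 != 0 by rewrite gt_eqF.
pose solve (al be : R) := ((al - t * be) / (1 - t ^+ 2)) *: x1 + ((be - t * al) / (1 - t ^+ 2)) *: y1.
have solx al be : gf sp x1 (solve al be) = al.
  rewrite /solve !(gf_addr, gf_scaler) // gxx -/t.
  by field.
have soly al be : gf sp y1 (solve al be) = be.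
  rewrite /solve !(gf_addr, gf_scaler) // gyy gyx.
  by field.
have [c Hc] := exists_out x10 Hind.
pose d := c - solve (gf sp x1 c) (gf sp y1 c).
have dx : gf sp x1 d = 0 by rewrite /d gf_addr // gf_oppr // solx subrr.
have dy : gf sp y1 d = 0 by rewrite /d gf_addr // gf_oppr // soly subrr.
have d0 : d != 0.
  apply/eqP => /eqP; rewrite subr_eq0 => /eqP E.
  by move: (Hc ((gf sp x1 c - t * gf sp y1 c) / (1 - t ^+ 2))
     ((gf sp y1 c - t * gf sp x1 c) / (1 - t ^+ 2))); rewrite {1}E eqxx.
clearbody d.
have nd := gf_pos Hsp d0.
have nd0 : gf sp d d != 0 by rewrite gt_eqF.
have dsolve al be : gf sp d (solve al be) = 0.
  by rewrite /solve !(gf_addr, gf_scaler) // !(gf_sym _ d) // dx dy !mulr0 addr0.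
pose h := dDu (sp (emb d) (emb d)).
pose al := - dDu (sp x (emb d)); pose be := - dDu (sp y (emb d)).
pose ga := - h / 2.
pose v := solve al be + (ga / gf sp d d) *: d.
pose w := madd (emb d) (dscale (deps R) (emb v)).
have w1 : w.1 = d by rewrite /= scale0r addr0.
have Dw p : dDu (sp w p) = dDu (sp (emb d) p) + gf sp v p.1.
  by rewrite Du_addl // Du_epsl // Re_dec.
have Dxw : dDu (sp x w) = 0.
  rewrite spC // Dw -/x1 gf_sym // /v gf_addr // gf_scaler // solx dx mulr0 addr0.
  by rewrite /al spC // subrr.
have Dyw : dDu (sp y w) = 0.
  rewrite spC // Dw -/y1 gf_sym // /v gf_addr // gf_scaler // soly dy mulr0 addr0.
  by rewrite /be spC // subrr.
have Dww : dDu (sp w w) = 0.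
  rewrite {1}/w Du_addl // Du_epsl // Re_dec // spC // Dw /= !(scale0r, addr0).
  rewrite -/h gf_sym // /v gf_addr // gf_scaler // dsolve add0r.
  by rewrite mulfVK // /ga; lra.
clearbody w.
have Dxx : dDu (sp x x) = 0 by rewrite Hxx.
have Dyy : dDu (sp y y) = 0 by rewrite Hyy.
have Dyx : dDu (sp y x) = 0 by rewrite spC.
have Dwx : dDu (sp w x) = 0 by rewrite spC.
have Dwy : dDu (sp w y) = 0 by rewrite spC.
have indep a b e : a *: x1 + b *: y1 + e *: d = 0 -> [/\ a = 0, b = 0 & e = 0].
  move=> E.
  have := congr1 (fun z => gf sp z d) E.
  rewrite !(gf_addl, gf_scalel) // dx dy gf0l // !mulr0 !add0r => /eqP.
  rewrite mulf_eq0 (negbTE nd0) orbF => /eqP e0.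
  move: E; rewrite e0 scale0r addr0 => /Hind [-> ->]; done.
pose P := fun z => exists a b e : R,
  z = madd (madd (rscale a x) (rscale b y)) (rscale e w).
have PE : pointE sp P.
  split.
  - exists x, y, w; split; last by move=> z.
    by move=> a b e /(congr1 fst) /=; rewrite w1; apply: indep.
  - move=> z1 z2 [a [b [e ->]]] [a' [b' [e' ->]]].
    rewrite Du_combl // (spC _ x) // (spC _ y) // (spC _ w) // !Du_combl //.
    by rewrite Dxx Dyy Hxy Dxw Dyw Dww Dyx Dwx Dwy; ring.
  - move=> z [a [b [e ->]]]; rewrite /in_epsM /= w1 => /indep [-> -> ->].
    by rewrite /madd /rscale /mzero /= !scale0r !addr0.
exists P; split; split => //.
- exists 1, 0, 0; rewrite /madd /rscale !scale1r !scale0r !addr0.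
  exact: surjective_pairing.
- exists 0, 1, 0; rewrite /madd /rscale !scale1r !scale0r !addr0 !add0r.
  exact: surjective_pairing.
Qed.
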